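(* Let $X$ be a set and $f=(f_1,\ldots,f_m):X\to\mathbb{R}^m$ a mapping, $M=\{1,\ldots,m\}$. If the free disposal hull $f(X)+\mathbb{R}^m_{\geq0}$ is convex, then the following are equivalent: $(\alpha)$ $\mathrm{WE}(f,X)=\mathrm{E}(f,X)$; $(\beta)$ $\displaystyle\bigcup_{\emptyset\neq I\subseteq M}\mathrm{E}(f_I,X)\subseteq\mathrm{E}(f,X)$.
   Context: Let $M=\{1,\ldots,m\}$. For a nonempty $I\subseteq M$ and $y,y'\in\mathbb{R}^m$: $y\lneq_I y'$ means $y_i\leq y'_i$ for all $i\in I$ and $y_j<y'_j$ for some $j\in I$; $y<_I y'$ means $y_i<y'_i$ for all $i\in I$. For $Y\subseteq\mathbb{R}^m$, $\mathrm{M}_I Y$ (resp. $\mathrm{WM}_I Y$) is the set of all $y'\in Y$ for which there is no $y\in Y$ with $y\lneq_I y'$ (resp. $y<_I y'$). For $f=(f_1,\ldots,f_m):X\to\mathbb{R}^m$ and $I=\{i_1<\cdots<i_k\}$, $f_I=(f_{i_1},\ldots,f_{i_k})$, and $\mathrm{E}(f_I,X)=f^{-1}(\mathrm{M}_I f(X))$ (efficient solutions), $\mathrm{WE}(f_I,X)=f^{-1}(\mathrm{WM}_I f(X))$ (weakly efficient solutions); $\mathrm{E}(f,X)=\mathrm{E}(f_M,X)$, $\mathrm{WE}(f,X)=\mathrm{WE}(f_M,X)$. $\mathbb{R}^m_{\geq0}$ is the nonnegative orthant, and the free disposal hull of $Z\subseteq\mathbb{R}^m$ is $Z+\mathbb{R}^m_{\geq0}$.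 *)

(* Defs.v *)
From Stdlib Require Import Reals.
Open Scope R_scope.

(* A point of R^m is represented by a function nat -> R; only the
   coordinates i < m are relevant.  Subsets are predicates. *)
Definition vec := nat -> R.

(* The index set M = {1,...,m}, represented as {0,...,m-1}. *)
Definition Mset (m : nat) : nat -> Prop := fun i => (i < m)%nat.

Definition lneqI (I : nat -> Prop) (y y' : vec) : Prop :=
  (forall i, I i -> y i <= y' i) /\ (exists j, I j /\ y j < y' j).

Definition ltI (I : nat -> Prop) (y y' : vec) : Prop :=
  forall i, I i -> y i < y' i.

Definition MinI (I : nat -> Prop) (Y : vec -> Prop) : vec -> Prop :=
  fun y' => Y y' /\ ~ (exists y, Y y /\ lneqI I y y').
Definition WMinI (I : nat -> Prop) (Y : vec -> Prop) : vec -> Prop :=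
  fun y' => Y y' /\ ~ (exists y, Y y /\ ltI I y y').

Definition image {X : Type} (f : X -> vec) : vec -> Prop :=
  fun y => exists x, y = f x.

Definition Eff {X : Type} (f : X -> vec) (I : nat -> Prop) : X -> Prop :=
  fun x => MinI I (image f) (f x).
Definition WEff {X : Type} (f : X -> vec) (I : nat -> Prop) : X -> Prop :=
  fun x => WMinI I (image f) (f x).

Definition fdh (m : nat) (Z : vec -> Prop) : vec -> Prop :=
  fun z => exists w d, Z w /\ (forall i, (i < m)%nat -> 0 <= d i) /\
             (forall i, (i < m)%nat -> z i = w i + d i).

Definition convex_in (m : nat) (S : vec -> Prop) : Prop :=
  forall a b t, S a -> S b -> 0 <= t <= 1 ->
    exists c, S c /\ (forall i, (i < m)%nat -> c i = t * a i + (1 - t) * b i).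

(* Main.v *)
Require Import Defs.
From Stdlib Require Import Reals Lra List Arith Lia Classical.
Open Scope R_scope.

Lemma comb_lt (yj zj F : R) : yj < F ->
  exists t, 0 < t < 1 /\ t * yj + (1 - t) * zj < F.
Proof.
  intro H. set (a := F - yj). set (B := Rabs (zj - F)).
  assert (Ha : 0 < a) by (unfold a; lra).
  assert (HB : 0 <= B) by apply Rabs_pos.
  assert (Hb : zj - F <= B) by apply Rle_abs.
  exists ((2*B + a) / (2*B + 2*a)).
  assert (HD : 0 < 2*B + 2*a) by lra.
  set (t := (2*B + a) / (2*B + 2*a)).
  assert (Ht : t * (2*B + 2*a) = 2*B + a) by (unfold t; field; lra).
  assert (0 < t < 1) by (split; nra).
  split; [exact H0|].
  assert (t * yj + (1 - t) * zj - F = - t * a + (1 - t) * (zj - F)) by (unfold a; ring).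
  assert ((1 - t) * (zj - F) <= (1 - t) * B) by (apply Rmult_le_compat_l; lra).
  nra.
Qed.

Lemma key (X : Type) (m : nat) (f : X -> vec) :
  convex_in m (fdh m (image f)) ->
  forall n l x, (length l <= n)%nat -> l <> nil -> (forall i, In i l -> (i < m)%nat) ->
  WEff f (fun i => In i l) x ->
  exists I, (forall i, I i -> (i < m)%nat) /\ (exists i, I i) /\ Eff f I x.
Proof.
  intros Hc n. induction n as [|n IH]; intros l x Hlen Hnil Hm Hw.
  { destruct l; simpl in Hlen; [congruence|lia]. }
  destruct (classic (Eff f (fun i => In i l) x)) as [HE|HE].
  { exists (fun i => In i l). split; [exact Hm|split; [|exact HE]].
    destruct l as [|a l]; [congruence|exists a; simpl; auto]. }
  destruct Hw as [Himg Hw].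
  unfold Eff, MinI in HE.
  destruct (classic (exists y, image f y /\ lneqI (fun i => In i l) y (f x))) as [Hy|Hy];
    [|exfalso; apply HE; split; assumption].
  destruct Hy as [y [Hyi [Hle [j [Hj Hlt]]]]].
  set (l' := remove Nat.eq_dec j l).
  assert (Hl' : (length l' < length l)%nat) by (apply remove_length_lt; exact Hj).
  destruct l' as [|k l''] eqn:El'.
  { exfalso. apply Hw. exists y. split; [exact Hyi|].
    intros i Hi. destruct (Nat.eq_dec i j) as [->|Hne]; [exact Hlt|].
    assert (In i l') by (apply in_in_remove; auto). rewrite El' in H. destruct H. }
  rewrite <- El' in *.
  destruct (classic (WEff f (fun i => In i l') x)) as [HW'|HW'].
  { apply (IH l' x); [lia| rewrite El'; congruence | |exact HW'].
    intros i Hi. apply in_remove in Hi. apply Hm; tauto. }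
  assert (Hz : exists z, image f z /\ ltI (fun i => In i l') z (f x)).
  { apply NNPP. intro Hn. apply HW'. split; [exact Himg|exact Hn]. }
  destruct Hz as [z [Hzi Hzl]].
  destruct (comb_lt (y j) (z j) (f x j) Hlt) as [t [Ht Htj]].
  assert (Hfa : forall w, image f w -> fdh m (image f) w).
  { intros w Hw'. exists w, (fun _ => 0). split; [exact Hw'|split; intros; lra]. }
  destruct (Hc y z t (Hfa y Hyi) (Hfa z Hzi) ltac:(lra)) as [c [[w [d [Hwi [Hd Hcw]]]] Hcc]].
  exfalso. apply Hw. exists w. split; [exact Hwi|].
  intros i Hi. assert (Him : (i < m)%nat) by (apply Hm; exact Hi).
  pose proof (Hd i Him). pose proof (Hcw i Him). pose proof (Hcc i Him).
  destruct (Nat.eq_dec i j) as [->|Hne]; [lra|].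
  assert (Hi' : In i l') by (apply in_in_remove; auto).
  pose proof (Hzl i Hi'). pose proof (Hle i Hi). nra.
Qed.

Theorem proposition2p3 (X : Type) (m : nat) (f : X -> vec) :
  (1 <= m)%nat ->
  convex_in m (fdh m (image f)) ->
  ((forall x, WEff f (Mset m) x <-> Eff f (Mset m) x) <->
   (forall (I : nat -> Prop),
      (forall i, I i -> (i < m)%nat) -> (exists i, I i) ->
      forall x, Eff f I x -> Eff f (Mset m) x)).
Proof.
  intros Hm1 Hc. split.
  - intros Heq I HI [i0 Hi0] x HE. apply Heq.
    destruct HE as [Hx HE]. split; [exact Hx|].
    intros [y [Hy Hlt]]. apply HE. exists y. split; [exact Hy|].
    split; [intros i Hi; left; apply Hlt; apply HI; exact Hi|].
    exists i0. split; [exact Hi0|apply Hlt; apply HI; exact Hi0].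
  - intros Hb x. split.
    + intros [Hx Hw].
      assert (Hw' : WEff f (fun i => In i (seq 0 m)) x).
      { split; [exact Hx|]. intros [y [Hy Hlt]]. apply Hw. exists y. split; [exact Hy|].
        intros i Hi. apply Hlt. apply in_seq. unfold Mset in Hi. lia. }
      destruct (key X m f Hc (length (seq 0 m)) (seq 0 m) x (le_n _)) as [I [HI [Hne HE]]].
      * destruct m; [lia|simpl; congruence].
      * intros i Hi. apply in_seq in Hi. lia.
      * exact Hw'.
      * exact (Hb I HI Hne x HE).
    + intros [Hx HE]. split; [exact Hx|].
      intros [y [Hy Hlt]]. apply HE. exists y. split; [exact Hy|].
      split; [intros i Hi; left; apply Hlt; exact Hi|].
      exists 0%nat. split; [unfold Mset; lia|apply Hlt; unfold Mset; lia].
Qed.
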